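(* Let $h\geq2$ and let $V\leq S_h$ be $2$-representable, i.e. $V=S(f)$ for some Boolean function $f:\{0,1\}^h\to\{0,1\}$. Then for every $n\geq2$, in $G=S_h\times S_n$ one has $O(V\times\{id\})=V\times\{id\}$.
   Context: For $\varphi\in S_h$ and $x\in\{0,1\}^h$, $x^\varphi=(x_{\varphi^{-1}(1)},\dots,x_{\varphi^{-1}(h)})$; the invariance group of $f:\{0,1\}^h\to\{0,1\}$ is $S(f)=\{\varphi\in S_h: f(x^\varphi)=f(x)\ \forall x\}$. Permutations compose as $(\sigma\tau)(x)=\sigma(\tau(x))$. Let $\mathcal{P}=(S_n)^h$ with $G=S_h\times S_n$ acting by $(p^{(\varphi,\psi)})_i=\psi\,p_{\varphi^{-1}(i)}$, and $p^U=\{p^g:g\in U\}$. $U\leq G$ is regular if for every $p$, $\{g\in U:p^g=p\}\subseteq S_h\times\{id\}$ (every subgroup of $S_h\times\{id\}$ is regular). For regular $U$, $\mathcal{A}(U)$ is the set of regular $W\leq G$ with $W\geq U$ and $p^W\subseteq p^U$ for all $p\in\mathcal{P}$, and $O(U)=\langle\mathcal{A}(U)\rangle$. *)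

(* Defs.v *)
From HB Require Import structures.
From mathcomp Require Import all_boot all_fingroup.
Set Implicit Arguments. Unset Strict Implicit. Unset Printing Implicit Defensive.
Local Open Scope group_scope.

Definition bvec (h : nat) := {ffun 'I_h -> bool}.
Definition bvec_perm h (x : bvec h) (phi : {perm 'I_h}) : bvec h :=
  [ffun i => x (phi^-1 i)].

Definition invgroup h (f : bvec h -> bool) : {set {perm 'I_h}} :=
  [set phi | [forall x, f (bvec_perm x phi) == f x]].

Definition two_representable h (V : {set {perm 'I_h}}) : Prop :=
  exists f : bvec h -> bool, V = invgroup f.

Definition Pt (h n : nat) := {ffun 'I_h -> {perm 'I_n}}.
Definition Gt (h n : nat) := ({perm 'I_h} * {perm 'I_n})%type.

(* (p^(phi,psi))_i = psi o p_{phi^-1(i)}; in mathcomp, (s * t) x = t (s x),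
   so psi o q is written q * psi. *)
Definition actP h n (p : Pt h n) (g : Gt h n) : Pt h n :=
  [ffun i => p (g.1^-1 i) * g.2].

Definition orbP h n (p : Pt h n) (U : {set Gt h n}) : {set Pt h n} :=
  [set actP p g | g in U].

Definition regular h n (U : {set Gt h n}) : bool :=
  [forall p : Pt h n, forall g in U, (actP p g == p) ==> (g.2 == 1)].

Definition inA h n (U W : {group Gt h n}) : bool :=
  [&& regular W, U \subset W & [forall p : Pt h n, orbP p W \subset orbP p U]].

Definition Oclos h n (U : {group Gt h n}) : {set Gt h n} :=
  << \bigcup_(W : {group Gt h n} | inA U W) (W : {set Gt h n}) >>.

(* Main.v *)
Require Import Defs.
From HB Require Import structures.
From mathcomp Require Import all_boot all_fingroup.
Local Open Scope group_scope.

Lemma key (h n : nat) (V : {group {perm 'I_h}}) (f : bvec h -> bool)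
  (W : {set Gt h n}) :
  0 < h -> 2 <= n -> V = invgroup f :> {set _} ->
  (forall p : Pt h n, orbP p W \subset orbP p (setX V [1 {perm 'I_n}])) ->
  W \subset setX V [1 {perm 'I_n}].
Proof.
move=> h0 n2 HV HW; apply/subsetP => -[phi psi] Hg.
have getu : forall p : Pt h n, exists v, v \in V /\ actP p (phi, psi) = actP p (v, 1).
  move=> p; have : actP p (phi, psi) \in orbP p W by apply: imset_f.
  move/(subsetP (HW p)) => /imsetP [[v w] Hu Heq].
  move: Hu; rewrite inE /= in_set1 => /andP [Hv /eqP Hw]; subst w.
  by exists v.
have Hpsi : psi = 1.
  have [v [_ Hv]] := getu [ffun _ => 1].
  have := congr1 (fun q : Pt h n => q (Ordinal h0)) Hv.
  by rewrite /actP /= !ffunE !mul1g.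
subst psi; rewrite inE /= in_set1 eqxx andbT.
have n0 : 0 < n by apply: leq_trans n2.
set a : 'I_n := Ordinal n0; set b : 'I_n := Ordinal n2.
have hab : a != b by [].
set t := tperm a b.
have ht : (1 : {perm 'I_n}) != t.
  apply/eqP => /(congr1 (fun s : {perm 'I_n} => s a)).
  rewrite perm1 tpermL => /eqP; by rewrite (negbTE hab).
rewrite HV inE; apply/forallP => x.
have [v [Vv Hv]] := getu [ffun i => if x i then 1 else t].
have Hx : bvec_perm x phi = bvec_perm x v.
  apply/ffunP => i; rewrite !ffunE.
  have := congr1 (fun q : Pt h n => q i) Hv.
  rewrite /actP /= !ffunE !mulg1.
  case: (x (phi^-1 i)); case: (x (v^-1 i)) => // E.
    by move: ht; rewrite E eqxx.
  by move: ht; rewrite E eqxx.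
rewrite Hx; move: Vv; rewrite HV inE => /forallP; exact.
Qed.

Theorem mainTheorem17 (h n : nat) (V : {group {perm 'I_h}}) :
  2 <= h -> two_representable V -> 2 <= n ->
  Oclos (setX_group V [1 {perm 'I_n}]%G) = setX V [1 {perm 'I_n}].
Proof.
move=> h2 [f HV] n2.
have h0 : 0 < h by apply: leq_trans h2.
apply/eqP; rewrite eqEsubset; apply/andP; split.
  rewrite /Oclos gen_subG; apply/bigcupsP => W /and3P [_ _ /forallP HW].
  exact: (@key h n V f W h0 n2 HV HW).
apply: subset_trans (subset_gen _).
apply: (bigcup_max (setX_group V [1 {perm 'I_n}]%G)) => //.
rewrite /inA subxx /=; apply/andP; split.
  apply/forallP => p; apply/forall_inP => g; rewrite inE in_set1 => /andP [_ ->].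
  by rewrite implybT.
by apply/forallP => p.
Qed.
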